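(* A standard quantum entity on a finite-dimensional complex Hilbert space $\mathcal{H}$ is state atomic: for states $p_{\bar c},p_{\bar d}$, if $O(e_E,p_{\bar c})\subseteq O(e_E,p_{\bar d})$ for every experiment $e_E$, then $p_{\bar c}=p_{\bar d}$.
   Context: A spectral family of $\mathcal{H}$ is a set $E=\{E_1,\dots,E_r\}$ of pairwise orthogonal nonzero orthogonal projections with $\sum_kE_k=I$. The standard quantum entity on $\mathcal{H}$ has states $p_{\bar c}$, one for each ray $\bar c$ (generated by a unit vector $c$), experiments $e_E$, one for each spectral family $E$, outcomes $x_{E_k}$, one for each orthogonal projection $E_k$, and outcome sets $O(e_E,p_{\bar c})=\{x_{E_k}:E_k\in E,\ E_kc\neq0\}$. *)

(* Defs.v *)
(* The Hilbert space H is C^n (row vectors 'rV[C]_n) with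
   C = R[i] the complex numbers over a real type R, and the standard inner
   product (spectral.dotmx).  Operators are n x n matrices acting on the
   right of row vectors (c *m P); for self-adjoint P this is the usual action. *)
From HB Require Import structures.
From mathcomp Require Import all_boot all_order all_algebra.
From mathcomp Require Import sesquilinear spectral.
From mathcomp Require Import reals.
From mathcomp.real_closed Require Import complex.
Set Implicit Arguments. Unset Strict Implicit. Unset Printing Implicit Defensive.
Import Order.TTheory GRing.Theory Num.Theory.
Local Open Scope ring_scope.
Local Open Scope sesquilinear_scope.

Section QE.
Variables (C : numClosedFieldType) (n : nat).

Definition orth_proj (P : 'M[C]_n) : Prop := P *m P = P /\ P ^t* = P.

(* spectral family: a finite set {E_1,...,E_r} of pairwise orthogonal nonzero
   orthogonal projections summing to the identity; given as a list of its
   elements, without repetition. *)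
Definition spectral_family (E : seq 'M[C]_n) : Prop :=
  uniq E /\
  (forall P, P \in E -> orth_proj P /\ P != 0) /\
  (forall P Q, P \in E -> Q \in E -> P != Q -> P *m Q = 0) /\
  \sum_(P <- E) P = 1%:M.

Definition unit_vector (c : 'rV[C]_n) : Prop := dotmx c c = 1.

(* the state p_{bar c} is the ray generated by c *)
Definition ray (c : 'rV[C]_n) : 'rV[C]_n -> Prop :=
  fun v => exists a : C, v = a *: c.

(* O(e_E, p_c) : outcomes x_{E_k} (identified with the projections E_k)
   with E_k c <> 0 *)
Definition outcome_set (E : seq 'M[C]_n) (c : 'rV[C]_n) : 'M[C]_n -> Prop :=
  fun P => P \in E /\ c *m P != 0.

End QE.

(* Main.v *)
Require Import Defs.
From HB Require Import structures.
From mathcomp Require Import all_boot all_order all_algebra.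
From mathcomp Require Import sesquilinear spectral.
From mathcomp Require Import reals.
From mathcomp.real_closed Require Import complex.
From Stdlib Require Import FunctionalExtensionality PropExtensionality.
Import Order.TTheory GRing.Theory Num.Theory.
Local Open Scope ring_scope.
Local Open Scope sesquilinear_scope.

Section Aux.
Variables (C : numClosedFieldType).

Lemma tC_mul m k p (A : 'M[C]_(m, k)) (B : 'M[C]_(k, p)) :
  (A *m B) ^t* = B ^t* *m A ^t*.
Proof. by rewrite trmx_mul map_mxM. Qed.

Lemma tC_1 k : (1%:M : 'M[C]_k) ^t* = 1%:M.
Proof. by rewrite trmx1 map_mx1. Qed.

Lemma tC_B k (A B : 'M[C]_k) : (A - B) ^t* = A ^t* - B ^t*.
Proof. by rewrite linearB /= map_mxB. Qed.

Variable n : nat.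
Variable d : 'rV[C]_n.
Hypothesis ud : unit_vector d.

Lemma dd1 : d *m d ^t* = 1%:M.
Proof. by rewrite [LHS]mx11_scalar -dotmxE ud. Qed.

Let P := d ^t* *m d.
Let Q := 1%:M - P.

Lemma PP : P *m P = P.
Proof. by rewrite /P mulmxA -(mulmxA (d ^t*)) dd1 mulmx1. Qed.

Lemma Pt : P ^t* = P.
Proof. by rewrite /P tC_mul trmxCK. Qed.

Lemma dP : d *m P = d.
Proof. by rewrite /P mulmxA dd1 mul1mx. Qed.

Lemma dQ : d *m Q = 0.
Proof. by rewrite /Q mulmxBr mulmx1 dP subrr. Qed.

Lemma QQ : Q *m Q = Q.
Proof. by rewrite /Q mulmxBr mulmx1 mulmxBl mul1mx PP subrr subr0. Qed.

Lemma Qt : Q ^t* = Q.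
Proof. by rewrite /Q tC_B tC_1 Pt. Qed.

Lemma PQ : P *m Q = 0.
Proof. by rewrite /Q mulmxBr mulmx1 PP subrr. Qed.

Lemma QP : Q *m P = 0.
Proof. by rewrite /Q mulmxBl mul1mx PP subrr. Qed.

Lemma d_neq0 : d != 0.
Proof.
apply/eqP => d0; move: ud; rewrite /unit_vector d0 dotmxE mul0mx mxE => /eqP.
by rewrite eq_sym oner_eq0.
Qed.

Lemma cP (c : 'rV[C]_n) : exists a : C, c *m P = a *: d.
Proof.
exists ((c *m d ^t*) 0 0).
by rewrite /P mulmxA {1}(mx11_scalar (c *m d ^t*)) mul_scalar_mx.
Qed.

Lemma spec : Q != 0 -> spectral_family [:: P; Q].
Proof.
move=> Q0.
have P0 : P != 0 by apply/eqP => P0; move: d_neq0; rewrite -dP P0 mulmx0 eqxx.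
have PnQ : P != Q.
  by apply/eqP => PQe; move: d_neq0; rewrite -dP PQe dQ eqxx.
split; first by rewrite /= inE PnQ.
split.
  move=> X; rewrite !inE => /orP [] /eqP ->.
    by split=> //; split; [exact: PP | exact: Pt].
  by split=> //; split; [exact: QQ | exact: Qt].
split.
  move=> X Y; rewrite !inE => /orP [] /eqP -> /orP [] /eqP ->;
    rewrite ?eqxx //= => _; [exact: PQ | exact: QP].
by rewrite big_cons big_cons big_nil addr0 /Q addrC subrK.
Qed.

End Aux.

Theorem mainTheorem16 (R : realType) (n : nat) (c d : 'rV[R[i]]_n) :
  unit_vector c -> unit_vector d ->
  (forall E : seq 'M[R[i]]_n, spectral_family E ->
     forall P, outcome_set E c P -> outcome_set E d P) ->
  ray c = ray d.
Proof.
move=> uc ud H.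
set P := d ^t* *m d.
set Q := 1%:M - P.
have cQ : c *m Q = 0.
  have [Q0|Q0] := eqVneq Q 0; first by rewrite Q0 mulmx0.
  apply/eqP; apply/negPn/negP => cQ.
  have [_ /negP] := H _ (@spec _ _ d ud Q0) Q (conj (mem_last P [:: Q]) cQ).
  by rewrite (@dQ _ _ d ud) eqxx.
have [a ca] := @cP _ _ d c.
have ce : c = a *: d.
  by rewrite -ca -{1}(mulmx1 c) -(subrK P 1%:M) mulmxDr -/Q cQ add0r.
have a0 : a != 0.
  by apply/eqP => a0; move: (@d_neq0 _ _ c uc); rewrite ce a0 scale0r eqxx.
apply: functional_extensionality => v; apply: propositional_extensionality.
split=> [[b ->]|[b ->]].
  by exists (b * a); rewrite ce scalerA.
by exists (b / a); rewrite ce scalerA mulfVK.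
Qed.
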